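(* Let $n\in\mathbb{N}_0$ and $r\in\mathbb{N}$, let $I$ be an open interval, and let $f_i:I\to\mathbb{R}$ ($i=1,\ldots,r$) and $g:I\to\mathbb{R}$ be functions which have a derivative of order $n$ on $I$. Suppose that $\mathbf{c}=(c_1,\ldots,c_r)\in\mathbb{R}^r$ satisfies $c_1+\cdots+c_r=0$. Then, for every $\mathbf{s}=(s_1,\ldots,s_r)\in(\mathbb{Z}_{\ge0})^r$ with $|\mathbf{s}|\le n$, \[ \sum_{|\mathbf{k}|=n}\binom{n}{\mathbf{k}}\prod_{i=1}^{r}c_i^{k_i}\left(f_i g^{k_i}\right)^{(s_i)}= \begin{cases} 0, & |\mathbf{s}|<n,\\[2mm] n!\left(\prod_{i=1}^{r}c_i^{s_i}\right)\left(\prod_{i=1}^{r}f_i\right)\left(g'\right)^{|\mathbf{s}|}, & |\mathbf{s}|=n. \end{cases} \]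
   Context: For $\mathbf{k}=(k_1,\ldots,k_r)\in\mathbb{Z}^r$, $|\mathbf{k}|=k_1+\cdots+k_r$. The sum $\sum_{|\mathbf{k}|=n}$ runs over all $\mathbf{k}\in(\mathbb{Z}_{\ge0})^r$ with $|\mathbf{k}|=n$, and $\binom{n}{\mathbf{k}}=\frac{n!}{k_1!\cdots k_r!\,(n-|\mathbf{k}|)!}$, i.e. the multinomial coefficient $\frac{n!}{k_1!\cdots k_r!}$ when $|\mathbf{k}|=n$. $h^{(s)}$ denotes the $s$-th derivative of $h$ (with $h^{(0)}=h$), and the conventions $c^0=1$ (including $0^0=1$) and $g^0=1$ are used. *)

(* Defs.v *)
From HB Require Import structures.
From mathcomp Require Import all_boot all_order all_algebra.
From mathcomp Require Import all_classical all_reals all_analysis.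
Set Implicit Arguments. Unset Strict Implicit. Unset Printing Implicit Defensive.
Import Order.TTheory GRing.Theory Num.Theory.
Local Open Scope ring_scope.

Definition mabs (r : nat) (k : 'I_r -> nat) : nat := (\sum_(i < r) k i)%N.

Definition multinom (R : realType) (r n : nat) (k : 'I_r -> nat) : R :=
  n`!%:R / ((\prod_(i < r) (k i)`!%:R) * (n - mabs k)`!%:R).

(* h has a derivative of order n on the set I: the successive derivatives
   h, h', ..., h^(n-1) are differentiable at every point of I. *)
Definition nth_derivable_on (R : realType) (n : nat) (I : set R) (h : R -> R) :=
  forall m : nat, (m < n)%N -> forall x, I x -> derivable (derive1n m h) x 1.

Definition open_itv (R : realType) (a b : \bar R) : set R :=
  [set x | (a < x%:E)%E /\ (x%:E < b)%E].

(* Main.v *)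
Require Import Defs.
From HB Require Import structures.
From mathcomp Require Import all_boot all_order all_algebra.
From mathcomp Require Import all_classical all_reals all_analysis.
From mathcomp Require Import ring zify.
Import Order.TTheory GRing.Theory Num.Theory.
Local Open Scope ring_scope.

Module Part1.
Import numFieldNormedType.Exports.
Local Open Scope ring_scope.
Local Open Scope classical_set_scope.
Section S.
Variable R : realType.
Lemma open_itv_open (a b : \bar R) : open (open_itv a b : set R).
Proof.
have -> : open_itv a b = [set x | (a < x%:E)%E] `&` [set x : R | (x%:E < b)%E] by [].
apply: openI.
- case: a => [r| |].
  + have -> : [set x : R | (r%:E < x%:E)%E] = [set x | r < x].
      by apply/seteqP; split => x /=; rewrite lte_fin.
    exact: open_gt.
  + have -> : [set x : R | (+oo < x%:E)%E] = set0.
      by apply/seteqP; split => x //=.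
    exact: open0.
  + have -> : [set x : R | (-oo < x%:E)%E] = setT.
      by apply/seteqP; split => x //= _; rewrite ltNyr.
    exact: openT.
- case: b => [r| |].
  + have -> : [set x : R | (x%:E < r%:E)%E] = [set x | x < r].
      by apply/seteqP; split => x /=; rewrite lte_fin.
    exact: open_lt.
  + have -> : [set x : R | (x%:E < +oo)%E] = setT.
      by apply/seteqP; split => x //= _; rewrite ltry.
    exact: openT.
  + have -> : [set x : R | (x%:E < -oo)%E] = set0.
      by apply/seteqP; split => x //=.
    exact: open0.
Qed.
Lemma open_itv_near (a b : \bar R) y : open_itv a b y -> \forall z \near y, open_itv a b z.
Proof. by move=> Iy; have := open_itv_open a b; rewrite openE => /(_ y Iy). Qed.

Lemma dmul {h1 h2 : R -> R} {y : R} : derivable h1 y 1 -> derivable h2 y 1 ->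
  derivable (fun z => h1 z * h2 z) y 1 /\
  derive1 (fun z => h1 z * h2 z) y = derive1 h1 y * h2 y + h1 y * derive1 h2 y.
Proof.
move=> d1 d2; have -> : (fun z => h1 z * h2 z) = h1 * h2 by [].
split; first exact: (derivableM d1 d2).
rewrite !derive1E (deriveM d1 d2) addrC; congr (_ + _); exact: mulrC.
Qed.

Lemma dadd {h1 h2 : R -> R} {y : R} : derivable h1 y 1 -> derivable h2 y 1 ->
  derivable (fun z => h1 z + h2 z) y 1 /\
  derive1 (fun z => h1 z + h2 z) y = derive1 h1 y + derive1 h2 y.
Proof.
move=> d1 d2; have -> : (fun z => h1 z + h2 z) = h1 + h2 by [].
split; first exact: derivableD.
by rewrite !derive1E (deriveD d1 d2).
Qed.

Variable I : set R.
Hypothesis openI : open I.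

Lemma nearI y : I y -> \forall z \near y, I z.
Proof. by move=> Iy; have := openI; rewrite openE => /(_ y Iy). Qed.

Lemma loc_derive (h1 h2 : R -> R) : (forall y, I y -> h1 y = h2 y) ->
  forall j y, I y -> derive1n j h1 y = derive1n j h2 y.
Proof.
move=> e j; elim: j => [|j IH] y Iy; first exact: e.
rewrite !derive1nS !derive1E; apply: near_eq_derive.
by near=> z; apply: IH; near: z; apply: nearI.
Unshelve. all: by end_near.
Qed.

Lemma loc_derivable (h1 h2 : R -> R) y : (forall y, I y -> h1 y = h2 y) ->
  I y -> derivable h1 y 1 -> derivable h2 y 1.
Proof.
move=> e Iy; apply: near_eq_derivable.
by near=> z; apply: e; near: z; apply: nearI.
Unshelve. all: by end_near.
Qed.

Definition D m h := nth_derivable_on m I h.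

Lemma D_eq m (h1 h2 : R -> R) : (forall y, I y -> h1 y = h2 y) -> D m h1 -> D m h2.
Proof.
move=> e d j jm y Iy.
apply: (@loc_derivable (derive1n j h1) (derive1n j h2) y _ Iy (d j jm y Iy)).
by move=> z Iz; exact: loc_derive.
Qed.

Lemma D_le {m m' h} : (m' <= m)%N -> D m h -> D m' h.
Proof. by move=> le d j jm; apply: d; apply: leq_trans jm le. Qed.

Lemma D_S m h : D m.+1 h <-> (forall y, I y -> derivable h y 1) /\ D m (derive1 h).
Proof.
split.
  move=> d; split; first exact: (d 0%N).
  by move=> j jm y Iy; rewrite -derive1Sn; apply: d.
case=> d0 d [|j] jm y Iy; first exact: d0.
by rewrite derive1Sn; apply: d.
Qed.

Lemma D0 h : D 0 h.
Proof. by move=> j; rewrite ltn0. Qed.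

Lemma D_cst m k : D m (fun _ => k).
Proof.
elim: m k => [|m IH] k; first exact: D0.
 apply/D_S; split.
  by move=> y _; exact: derivable_cst.
apply: (@D_eq m (fun _ => 0)); last exact: IH.
by move=> y _; exact: (esym (derive1_cst k y)).
Qed.

Lemma D_add m h1 h2 : D m h1 -> D m h2 -> D m (fun z => h1 z + h2 z).
Proof.
elim: m h1 h2 => [|m IH] h1 h2; first by move=> *; exact: D0.
move=> /D_S[a1 b1] /D_S[a2 b2]; apply/D_S; split.
  by move=> y Iy; case: (dadd (a1 y Iy) (a2 y Iy)).
apply: (@D_eq m (fun z => derive1 h1 z + derive1 h2 z)); last exact: IH.
by move=> y Iy; case: (dadd (a1 y Iy) (a2 y Iy)).
Qed.

Lemma D_mul m h1 h2 : D m h1 -> D m h2 -> D m (fun z => h1 z * h2 z).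
Proof.
elim: m h1 h2 => [|m IH] h1 h2 d1 d2; first exact: D0.
have [a1 b1] := D_S m h1; have [a2 b2] := D_S m h2.
case: (a1 d1) => e1 f1; case: (a2 d2) => e2 f2.
apply/D_S; split.
  by move=> y Iy; case: (dmul (e1 y Iy) (e2 y Iy)).
apply: (@D_eq m (fun z => derive1 h1 z * h2 z + h1 z * derive1 h2 z)).
  by move=> y Iy; case: (dmul (e1 y Iy) (e2 y Iy)).
apply: D_add; apply: IH.
- exact: f1.
- exact: (D_le (leqnSn m) d2).
- exact: (D_le (leqnSn m) d1).
- exact: f2.
Qed.


Lemma dscale {h : R -> R} {y : R} r : derivable h y 1 ->
  derivable (fun z => r * h z) y 1 /\
  derive1 (fun z => r * h z) y = r * derive1 h y.
Proof.
move=> d; have [d1 e1] := @dmul (fun _ => r) h y (derivable_cst r y 1) d.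
split => //; rewrite e1.
have -> : derive1 (fun _ : R => r) y = 0 by exact: (derive1_cst r y).
by rewrite mul0r add0r.
Qed.

Lemma dpow {h : R -> R} {y : R} m : derivable h y 1 ->
  derivable (fun z => h z ^+ m) y 1 /\
  derive1 (fun z => h z ^+ m) y = m%:R * h y ^+ m.-1 * derive1 h y.
Proof.
move=> d; rewrite -exprfctE; split; first exact: derivableX.
by rewrite !derive1E deriveX.
Qed.

Lemma dsum N (h : nat -> R -> R) y : (forall j, (j < N)%N -> derivable (h j) y 1) ->
  derivable (fun z => \sum_(j < N) h j z) y 1 /\
  derive1 (fun z => \sum_(j < N) h j z) y = \sum_(j < N) derive1 (h j) y.
Proof.
elim: N => [|N IH] d.
  have -> : (fun z => \sum_(j < 0) h j z) = (fun _ => 0).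
    by apply/funext => z; rewrite big_ord0.
  rewrite big_ord0; split; first exact: (derivable_cst (0:R) y 1).
  exact: (derive1_cst (0:R) y).
have -> : (fun z => \sum_(j < N.+1) h j z) = (fun z => \sum_(j < N) h j z + h N z).
  by apply/funext => z; rewrite big_ord_recr.
have [a b] := IH (fun j jN => d j (ltnW jN)).
have [a' b'] := dadd a (d N (ltnSn N)).
by split => //; rewrite b' b big_ord_recr.
Qed.

End S.

End Part1.
Import Part1.

Module Part2.
Import numFieldNormedType.Exports.
Local Open Scope ring_scope.
Local Open Scope classical_set_scope.

Section A.
Variable R : realType.

Lemma d1cst0 (y : R) : derive1 (fun _ : R => (0:R)) y = 0.
Proof. exact: derive1_cst. Qed.

Fixpoint A (f g : R -> R) (s : nat) : nat -> R -> R :=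
  match s with
  | 0 => fun j => if j == 0%N then f else fun _ => 0
  | s'.+1 => fun j y => derive1 (A f g s' j) y + j%:R * derive1 g y *
       (if j is j'.+1 then A f g s' j' y else 0)
  end.

Lemma A0 f g s j : (s < j)%N -> A f g s j = fun _ => 0.
Proof.
elim: s j => [|s IH] [|j] //= sj.
apply/funext => y; rewrite IH; last exact: ltnW.
rewrite IH; last exact: sj.
rewrite d1cst0.
by rewrite mulr0 addr0.
Qed.

Lemma Add f g s y : A f g s s y = s`!%:R * f y * derive1 g y ^+ s.
Proof.
elim: s => [|s IH] /=; first by rewrite mul1r expr0 mulr1.
rewrite A0 ?ltnSn //.
rewrite d1cst0.
rewrite IH add0r factS natrM exprS; ring.
Qed.

Lemma step_alg (k s : nat) (gy g1 : R) (a a' : nat -> R) : a' s.+1 = 0 ->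
  \sum_(j < s.+1) ('C(k, j)%:R * ((k - j)%:R * gy ^+ (k - j).-1 * g1) * a j
     + 'C(k, j)%:R * gy ^+ (k - j) * a' j)
  = \sum_(j < s.+2) 'C(k, j)%:R * gy ^+ (k - j) *
      (a' j + j%:R * g1 * (if (j : nat) is j'.+1 then a j' else 0)).
Proof.
move=> as0.
under [RHS]eq_bigr do rewrite mulrDr.
rewrite !big_split /= addrC; congr (_ + _).
  by rewrite [RHS]big_ord_recr /= as0 mulr0 addr0.
rewrite [RHS]big_ord_recl /= !mulr0 add0r.
apply: eq_bigr => j _; rewrite /bump leq0n add1n add0n.
have E : ('C(k, j)%:R * (k - j)%:R : R) = 'C(k, j.+1)%:R * j.+1%:R.
  by rewrite -!natrM mulnC -mul_bin_left mulnC.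
rewrite -subnS.
transitivity (('C(k, j)%:R * (k - j)%:R) * gy ^+ (k - j.+1) * g1 * a j); first ring.
rewrite E; ring.
Qed.


Variable I : set R.
Hypothesis openI : open I.
Variables (n : nat) (f g : R -> R).
Hypothesis Df : D R I n f.
Hypothesis Dg : D R I n g.

Lemma DA s j : (s <= n)%N -> D R I (n - s) (A f g s j).
Proof.
elim: s j => [|s IH] j sn.
  rewrite subn0 /=; case: (j == 0%N); [exact: Df | exact: (D_cst R I openI)].
have sn' : (s <= n)%N by exact: ltnW.
have E : (n - s)%N = (n - s.+1).+1 by rewrite subnSK.
have Dg' : D R I (n - s.+1) (derive1 g).
  have n0 : n = n.-1.+1 by rewrite prednK // (leq_ltn_trans (leq0n s) sn).
  have := proj1 (D_S R I n.-1 g); rewrite -n0 => /(_ Dg) [_ d].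
  apply: (D_le R I _ d); rewrite -subn1; exact: (leq_sub2l n (ltn0Sn s)).
have IHj := IH j sn'; rewrite E in IHj; have [_ dA'] := (D_S R I _ _).1 IHj.
rewrite /=.
apply: (D_add R I openI); first exact: dA'.
apply: (D_mul R I openI).
  apply: (D_mul R I openI); [exact: (D_cst R I openI) | exact: Dg'].
case: j {IHj dA'} => [|j]; first exact: (D_cst R I openI).
apply: (D_le R I (leq_sub2l n (leqnSn s))); exact: IH.
Qed.

Lemma Dform s k y : (s <= n)%N -> I y ->
  derive1n s (fun z => f z * g z ^+ k) y =
  \sum_(j < s.+1) 'C(k, j)%:R * g y ^+ (k - j) * A f g s j y.
Proof.
elim: s y => [|s IH] y sn Iy.
  by rewrite big_ord1 /= bin0 mulr1n mul1r subn0 mulrC.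
have sn' := ltnW sn.
rewrite derive1nS.
set G := fun z => \sum_(j < s.+1) 'C(k, j)%:R * g z ^+ (k - j) * A f g s j z.
have -> : derive1 (derive1n s (fun z => f z * g z ^+ k)) y = derive1 G y.
  exact: (loc_derive R I openI _ _ (fun z Iz => IH z sn' Iz) 1 y Iy).
have n0 : (0 < n)%N by rewrite (leq_ltn_trans (leq0n s) sn).
have dg : derivable g y 1 := Dg 0%N n0 y Iy.
have dA j : derivable (A f g s j) y 1.
  by apply: (DA s j sn' 0%N) => //; rewrite subn_gt0.
have dT j : derivable (fun z => 'C(k, j)%:R * g z ^+ (k - j) * A f g s j z) y 1 /\
   derive1 (fun z => 'C(k, j)%:R * g z ^+ (k - j) * A f g s j z) y =
   'C(k, j)%:R * ((k - j)%:R * g y ^+ (k - j).-1 * derive1 g y) * A f g s j y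
   + 'C(k, j)%:R * g y ^+ (k - j) * derive1 (A f g s j) y.
  have [p1 p2] := dpow R (k - j) dg.
  have [q1 q2] := dscale R ('C(k, j)%:R) p1.
  have [r1 r2] := dmul R q1 (dA j).
  by split; [exact: r1 | rewrite r2 q2 p2].
have [_ dGe] := dsum R (s.+1)
   (fun j z => 'C(k, j)%:R * g z ^+ (k - j) * A f g s j z) y (fun j _ => (dT j).1).
transitivity (\sum_(j < s.+1) derive1
   (fun z => 'C(k, j)%:R * g z ^+ (k - j) * A f g s j z) y); first exact: dGe.
under eq_bigr do rewrite (dT _).2.
apply: etrans (step_alg k s (g y) (derive1 g y) (fun j => A f g s j y)
   (fun j => derive1 (A f g s j) y) _) _.
  by rewrite /= (@A0 f g s s.+1 (ltnSn s)); exact: d1cst0.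
by apply: eq_bigr => j _.
Qed.

End A.

End Part2.
Import Part2.

Module Part3.
Local Open Scope ring_scope.

Section Alg.
Variable R : realType.

Definition Eqn (n : nat) (p q : {poly R}) := forall m, (m <= n)%N -> p`_m = q`_m.

Lemma EqnM n p q p' q' : Eqn n p q -> Eqn n p' q' -> Eqn n (p * p') (q * q').
Proof.
move=> e e' m mn; rewrite !coefM; apply: eq_bigr => j _.
have jm : (j <= m)%N by rewrite -ltnS.
rewrite e ?e' //; [exact: leq_trans (leq_subr j m) mn | exact: leq_trans jm mn].
Qed.

Definition Ex n (w : R) : {poly R} := \poly_(m < n.+1) (w ^+ m / m`!%:R).

Lemma factr_neq0 m : (m`!%:R : R) != 0.
Proof. by rewrite pnatr_eq0 -lt0n fact_gt0. Qed.

Lemma binr_neq0 {m j} : (j <= m)%N -> ('C(m, j)%:R : R) != 0.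
Proof. by move=> jm; rewrite pnatr_eq0 -lt0n bin_gt0. Qed.

Lemma fact_split {m j} : (j <= m)%N -> (m`!%:R : R) = 'C(m, j)%:R * (j`!%:R * (m - j)`!%:R).
Proof. by move=> jm; rewrite -!natrM bin_fact. Qed.

Lemma EqnEE n w v : Eqn n (Ex n w * Ex n v) (Ex n (w + v)).
Proof.
move=> m mn; rewrite coefM coef_poly ltnS mn addrC exprDn mulr_suml.
apply: eq_bigr => j _.
have jm : (j <= m)%N by rewrite -ltnS.
rewrite !coef_poly ltnS (leq_trans jm mn) ltnS (leq_trans (leq_subr j m) mn).
rewrite (fact_split jm).
have h1 := factr_neq0 j; have h2 := factr_neq0 (m - j); have h3 := binr_neq0 jm.
rewrite -mulr_natr; field.
by rewrite h1 h2 h3.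
Qed.

Lemma Ex0 n : Eqn n (Ex n 0) 1.
Proof.
move=> m mn; rewrite coef_poly ltnS mn coefC expr0n.
case: eqP => [->|_] /=; first by rewrite mulr1n divr1.
by rewrite mul0r.
Qed.

Lemma Eqn_sym n p q : Eqn n p q -> Eqn n q p.
Proof. by move=> e m mn; rewrite e. Qed.

Lemma Eqn_trans n p q t : Eqn n p q -> Eqn n q t -> Eqn n p t.
Proof. by move=> e e' m mn; rewrite e ?e'. Qed.

Lemma Eqn_prodEx n r (a : 'I_r -> R) :
  Eqn n (\prod_(i < r) Ex n (a i)) (Ex n (\sum_(i < r) a i)).
Proof.
apply: (big_ind2 (fun p w => Eqn n p (Ex n w))).
- exact: Eqn_sym (Ex0 n).
- move=> p1 w1 p2 w2 e1 e2; apply: Eqn_trans (EqnEE n w1 w2).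
  exact: EqnM.
- by move=> i _ m.
Qed.

Lemma coef_prod_size (I : Type) (l : seq I) (B : I -> {poly R}) (s : I -> nat) :
  (forall i, (size (B i) <= (s i).+1)%N) ->
  (size (\prod_(i <- l) B i)%R <= (\sum_(i <- l) s i).+1)%N /\
  (\prod_(i <- l) B i)`_(\sum_(i <- l) s i) = \prod_(i <- l) (B i)`_(s i).
Proof.
move=> hs; elim: l => [|i l [IH1 IH2]].
  by rewrite !big_nil size_poly1 coefC.
rewrite !big_cons; split.
  have := size_polyMleq (B i) (\prod_(j <- l) B j); have := hs i; move: IH1; lia.
set S := (\sum_(j <- l) s j)%N.
have j0lt : (s i < (s i + S).+1)%N by rewrite ltnS leq_addr.
rewrite coefM (bigD1 (Ordinal j0lt)) //= addKn IH2.
rewrite [X in _ + X]big1 ?addr0 // => j /eqP jn.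
have jn' : nat_of_ord j <> s i by move=> e; apply: jn; apply: val_inj.
case: (ltnP j (s i)) => ji.
  rewrite (leq_sizeP _ _ IH1) ?mulr0 //.
  have := ltn_ord j; lia.
rewrite (leq_sizeP _ _ (hs i)) ?mul0r //; lia.
Qed.


Lemma sum_widen (F : nat -> R) a b : (a <= b)%N -> (forall j, (a < j)%N -> F j = 0) ->
  \sum_(j < a.+1) F j = \sum_(j < b.+1) F j.
Proof.
move=> ab F0; rewrite (big_ord_widen b.+1 F) ?ltnS // big_mkcond.
by apply: eq_bigr => j _; case: (ltnP j a.+1) => // aj; rewrite F0.
Qed.

Lemma coef_prod_ffun n r (F : 'I_r -> nat -> R) :
  (\prod_(i < r) \poly_(m < n.+1) F i m)`_n =
  \sum_(k : {ffun 'I_r -> 'I_n.+1} | mabs (fun i => nat_of_ord (k i)) == n)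
     \prod_(i < r) F i (k i).
Proof.
under eq_bigr do rewrite poly_def.
rewrite bigA_distr_bigA coef_sum [RHS]big_mkcond /=.
apply: eq_bigr => k _.
rewrite (eq_bigr (fun i => (F i (k i))%:P * 'X^(k i))); last first.
  by move=> i _; rewrite mul_polyC.
rewrite big_split /= -rmorph_prod prodrXr coefCM coefXn /mabs eq_sym.
by case: (_ == _); rewrite ?mulr1 ?mulr0.
Qed.

Lemma algmain n r (c : 'I_r -> R) (z : R) (s : 'I_r -> nat) (al : 'I_r -> nat -> R) :
  \sum_(i < r) c i = 0 -> (mabs s <= n)%N -> (forall i j, (s i < j)%N -> al i j = 0) ->
  \sum_(k : {ffun 'I_r -> 'I_n.+1} | mabs (fun i => nat_of_ord (k i)) == n)
     multinom R n (fun i => nat_of_ord (k i)) *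
     \prod_(i < r) (c i ^+ k i *
        \sum_(j < n.+1) 'C(k i, j)%:R * z ^+ (k i - j) * al i j)
  = if (mabs s < n)%N then 0
    else n`!%:R * \prod_(i < r) (c i ^+ s i * al i (s i) / (s i)`!%:R).
Proof.
move=> c0 sn al0.
pose P i := \poly_(m < n.+1) (c i ^+ m *
   (\sum_(j < n.+1) 'C(m, j)%:R * z ^+ (m - j) * al i j) / m`!%:R).
pose B i := \poly_(j < n.+1) (c i ^+ j * al i j / j`!%:R).
transitivity (n`!%:R * (\prod_(i < r) P i)`_n).
  rewrite coef_prod_ffun mulr_sumr; apply: eq_bigr => k /eqP kn.
  rewrite /multinom kn subnn fact0 /= mulr1 [X in _ = _ * X]big_split prodfV /=; ring.
have EP i : Eqn n (P i) (B i * Ex n (c i * z)).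
  move=> m mn; rewrite coefM coef_poly ltnS mn.
  rewrite -(@sum_widen (fun j => 'C(m, j)%:R * z ^+ (m - j) * al i j) m n mn); last first.
    by move=> j mj; rewrite bin_small // mul0r mul0r.
  rewrite mulr_sumr mulr_suml; apply: eq_bigr => j _.
  have jm : (j <= m)%N by rewrite -ltnS.
  rewrite !coef_poly ltnS (leq_trans jm mn) ltnS (leq_trans (leq_subr j m) mn).
  have cm : c i ^+ m = c i ^+ j * c i ^+ (m - j) by rewrite -exprD subnKC.
  rewrite cm (fact_split jm) exprMn.
  have h1 := factr_neq0 j; have h2 := factr_neq0 (m - j); have h3 := binr_neq0 jm.
  field; by rewrite h1 h2 h3.
have EPB : Eqn n (\prod_(i < r) P i) (\prod_(i < r) B i * 1).
  apply: (@Eqn_trans _ _ (\prod_(i < r) (B i * Ex n (c i * z)))).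
    apply: (big_ind2 (Eqn n)); [by move=> m | by move=> *; exact: EqnM | by move=> i _; exact: EP].
  rewrite big_split; apply: EqnM; first by move=> m.
  have H : Eqn n (\prod_(i < r) Ex n (c i * z)) (Ex n (\sum_(i < r) c i * z)).
    exact: (Eqn_prodEx n r (fun i => c i * z)).
  rewrite -mulr_suml c0 mul0r in H.
  exact (Eqn_trans _ _ _ _ H (Ex0 n)).
rewrite (EPB n (leqnn n)) mulr1.
have hsz i : (size (B i) <= (s i).+1)%N.
  apply/leq_sizeP => j sj; rewrite coef_poly; case: ifP => // _.
  by rewrite al0 // mulr0 mul0r.
have [sz cf] := @coef_prod_size _ (index_enum 'I_r) B s hsz.
case: ltnP => h.
  by rewrite (leq_sizeP _ _ sz) ?mulr0.
have e : mabs s = n by apply/eqP; rewrite eqn_leq sn h.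
have -> : (\prod_(i < r) B i)`_n = (\prod_(i < r) B i)`_(mabs s) by rewrite e.
rewrite cf; congr (_ * _); apply: eq_bigr => i _.
rewrite coef_poly ltnS (leq_trans _ sn) //.
by rewrite /mabs (bigD1 i) //= leq_addr.
Qed.

End Alg.

End Part3.
Import Part3.


Theorem corollary2 (R : realType) (n r : nat) (a b : \bar R)
  (f : 'I_r -> R -> R) (g : R -> R) (c : 'I_r -> R) :
  (0 < r)%N -> (a < b)%E ->
  (forall i, nth_derivable_on n (open_itv a b) (f i)) ->
  nth_derivable_on n (open_itv a b) g ->
  \sum_(i < r) c i = 0 ->
  forall s : 'I_r -> nat, (mabs s <= n)%N ->
  forall x, open_itv a b x ->
    \sum_(k : {ffun 'I_r -> 'I_n.+1} | mabs (fun i => nat_of_ord (k i)) == n)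
       multinom R n (fun i => nat_of_ord (k i)) *
       \prod_(i < r) (c i ^+ k i *
          derive1n (s i) (fun y => f i y * g y ^+ k i) x)
    = if (mabs s < n)%N then 0
      else n`!%:R * (\prod_(i < r) c i ^+ s i) * (\prod_(i < r) f i x)
           * (derive1 g x) ^+ mabs s.
Proof.
move=> _ _ Df Dg c0 s sn x Ix.
have openI := open_itv_open R a b.
have sin i : (s i <= n)%N.
  by apply: leq_trans sn; rewrite /mabs (bigD1 i) //= leq_addr.
have E (k : {ffun 'I_r -> 'I_n.+1}) i :
    derive1n (s i) (fun y => f i y * g y ^+ k i) x =
    \sum_(j < n.+1) 'C(k i, j)%:R * g x ^+ (k i - j) * A R (f i) g (s i) j x.
  rewrite (Dform R _ openI n (f i) g (Df i) Dg (s i) (k i) x (sin i) Ix).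
  apply: (sum_widen R (fun j => 'C(k i, j)%:R * g x ^+ (k i - j) * A R (f i) g (s i) j x)); first exact: sin.
  by move=> j sj; rewrite A0 // mulr0.
transitivity (\sum_(k : {ffun 'I_r -> 'I_n.+1} | mabs (fun i => nat_of_ord (k i)) == n)
     multinom R n (fun i => nat_of_ord (k i)) *
     \prod_(i < r) (c i ^+ k i *
        \sum_(j < n.+1) 'C(k i, j)%:R * g x ^+ (k i - j) * A R (f i) g (s i) j x)).
  by apply: eq_bigr => k _; congr (_ * _); apply: eq_bigr => i _; rewrite E.
rewrite (algmain R n r c (g x) s (fun i j => A R (f i) g (s i) j x) c0 sn); last first.
  by move=> i j sj; rewrite A0.
case: ifP => _ //.
under eq_bigr => i _ do rewrite Add.
rewrite -!mulrA; congr (_ * _).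
have -> : \prod_(i < r) (c i ^+ s i * ((s i)`!%:R * f i x * derive1 g x ^+ s i) / (s i)`!%:R)
   = \prod_(i < r) (c i ^+ s i * (f i x * derive1 g x ^+ s i)).
  apply: eq_bigr => i _; have h := factr_neq0 R (s i); field; exact: h.
by rewrite !big_split /= prodrXr.
Qed.
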